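(* Let $H$ be an nb-critical graph, $vw\in E(H)$, and $H'=H-vw$. Suppose vertices $s,t$ of a graph $J$ are linked in $J$ via $H$, i.e. $J$ contains a subgraph isomorphic to $H'$ under an isomorphism mapping $v\mapsto s$ and $w\mapsto t$. Then for every near-bipartite coloring $I,F$ of $J$, either $\{s,t\}\subseteq I$, or $\{s,t\}\subseteq F$ and $J[F]$ contains a path from $s$ to $t$.
   Context: A near-bipartite coloring (nb-coloring) of a (multi)graph is a partition of its vertex set into $I,F$ with $I$ independent and the subgraph induced by $F$ a forest (no circuits). A graph is nb-critical if it has no nb-coloring but every proper subgraph has one. *)

(* Defs.v *)
(* Finite multigraphs (loops and parallel edges allowed)
   given by a vertex finType V, an edge finType E and an endpoint map
   ends : E -> V * V. *)
From mathcomp Require Import all_boot.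
Set Implicit Arguments.
Unset Strict Implicit.
Unset Printing Implicit Defensive.

Section MGraph.
Variables (V E : finType) (ends : E -> V * V).

Definition joins (e : E) (x y : V) : bool :=
  (ends e == (x, y)) || (ends e == (y, x)).

Definition is_subgraph (VS : {set V}) (ES : {set E}) : Prop :=
  forall e, e \in ES -> (ends e).1 \in VS /\ (ends e).2 \in VS.

(* A circuit using edges from ES: k >= 1 distinct vertices x_0..x_{k-1}
   and k distinct edges e_0..e_{k-1} of ES, e_i joining x_i and
   x_{i+1 mod k}.  (k = 1: a loop; k = 2: two parallel edges.) *)
Definition is_circuit (ES : {set E}) (xs : seq V) (es : seq E) : Prop :=
  [/\ 0 < size xs, size es = size xs, uniq xs & uniq es] /\
  all (fun e => e \in ES) es /\
      all (fun p : E * (V * V) => joins p.1 p.2.1 p.2.2)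
          (zip es (zip xs (rot 1 xs))).

Definition acyclic (ES : {set E}) : Prop :=
  forall xs es, ~ is_circuit ES xs es.

Definition induced (ES : {set E}) (F : {set V}) : {set E} :=
  [set e in ES | ((ends e).1 \in F) && ((ends e).2 \in F)].

Definition independent (ES : {set E}) (I : {set V}) : Prop :=
  forall e, e \in ES -> ~ ((ends e).1 \in I /\ (ends e).2 \in I).

Definition nb_coloring (VS : {set V}) (ES : {set E}) (I F : {set V}) : Prop :=
  [/\ I :&: F = set0, I :|: F = VS, independent ES I & acyclic (induced ES F)].

Definition nb_colorable (VS : {set V}) (ES : {set E}) : Prop :=
  exists I F, nb_coloring VS ES I F.

Definition nb_critical : Prop :=
  ~ nb_colorable setT setT /\
  forall VS ES, is_subgraph VS ES -> (VS, ES) != (setT, setT) ->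
    nb_colorable VS ES.

Definition path_in (ES : {set E}) (s t : V) : Prop :=
  exists xs : seq V,
    [/\ uniq (s :: xs), last s xs = t &
        path (fun x y => [exists e in ES, joins e x y]) s xs].
End MGraph.

(* s, t are linked in J via H, with respect to the edge vw of H joining
   v and w: (phi, psi) is an isomorphism from H' = H - vw onto a subgraph
   of J, i.e. injective on vertices and on the edges of H', preserving
   incidence, with phi v = s and phi w = t. *)
Definition linked_via (VH EH : finType) (endsH : EH -> VH * VH)
  (vw : EH) (v w : VH) (VJ EJ : finType) (endsJ : EJ -> VJ * VJ)
  (s t : VJ) : Prop :=
  joins endsH vw v w /\
  exists (phi : VH -> VJ) (psi : EH -> EJ),
    [/\ injective phi, {in [set~ vw] &, injective psi},
        (forall e, e != vw ->
           joins endsJ (psi e) (phi (endsH e).1) (phi (endsH e).2)),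
        phi v = s & phi w = t].

(* Main.v *)
Require Import Defs.
From mathcomp Require Import all_boot.
From Stdlib Require Import Classical.
Set Implicit Arguments.
Unset Strict Implicit.
Unset Printing Implicit Defensive.

Definition Rg (V E : finType) (ends : E -> V * V) : rel (V * E) :=
  fun a b => joins ends a.2 a.1 b.1.

Lemma joins_sym (V E : finType) (ends : E -> V * V) e x y :
  joins ends e x y = joins ends e y x.
Proof. by rewrite /joins orbC. Qed.

Lemma joins_ends (V E : finType) (ends : E -> V * V) e x y :
  joins ends e x y ->
  (x = (ends e).1 /\ y = (ends e).2) \/ (x = (ends e).2 /\ y = (ends e).1).
Proof.
rewrite /joins; case: (ends e) => a b /=.
by case/orP => /eqP [-> ->]; [left|right].
Qed.

Lemma zip_cycle_aux (V E : finType) (ends : E -> V * V) x e y f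
  (xs : seq V) (es : seq E) : size es = size xs ->
  all (fun p : E * (V * V) => joins ends p.1 p.2.1 p.2.2)
    (zip (e :: es) (zip (x :: xs) (rcons xs y)))
  = path (Rg ends) (x, e) (rcons (zip xs es) (y, f)).
Proof.
elim: xs x e es => [|x2 xs IH] x e [|e2 es] //= [H].
by rewrite -IH.
Qed.

Lemma zip_cycle (V E : finType) (ends : E -> V * V) (xs : seq V) (es : seq E) :
  size es = size xs -> 0 < size xs ->
  all (fun p : E * (V * V) => joins ends p.1 p.2.1 p.2.2)
    (zip es (zip xs (rot 1 xs)))
  = cycle (Rg ends) (zip xs es).
Proof.
case: xs => [|x xs] //; case: es => [|e es] //= [H] _.
by rewrite rot1_cons -(zip_cycle_aux ends x e x e H).
Qed.

Lemma path_in_sym (V E : finType) (ends : E -> V * V) ES a b :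
  path_in ends ES a b -> path_in ends ES b a.
Proof.
move=> [xs [Hu Hl Hp]]; exists (rev (belast a xs)); split.
- by rewrite -Hl -rev_rcons -lastI rev_uniq.
- by rewrite -Hl -(last_cons a) -rev_rcons -lastI rev_cons last_rcons.
- rewrite -Hl rev_path; apply: (sub_path _ Hp) => x y /existsP [e /andP [He Hj]].
  by apply/existsP; exists e; rewrite He joins_sym.
Qed.

Theorem lemma3p2 (VH EH : finType) (endsH : EH -> VH * VH)
  (vw : EH) (v w : VH)
  (VJ EJ : finType) (endsJ : EJ -> VJ * VJ) (s t : VJ) :
  nb_critical endsH ->
  joins endsH vw v w ->
  linked_via endsH vw v w endsJ s t ->
  forall I F : {set VJ}, nb_coloring endsJ setT setT I F ->
    (s \in I /\ t \in I) \/
    [/\ s \in F, t \in F & path_in endsJ (induced endsJ setT F) s t].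
Proof.
move=> [Hnc _] Hvw [_ [phi [psi [phi_inj psi_inj Hpsi Hs Ht]]]] I F
  [HIF HIFu HindJ HacJ].
set IH := [set x | phi x \in I]; set FH := [set x | phi x \in F].
have memIF x : (x \in I) || (x \in F).
  have: x \in I :|: F by rewrite HIFu inE.
  by rewrite inE.
have disj x : x \in I -> x \in F -> False.
  move=> a b; have: x \in I :&: F by rewrite inE a b.
  by rewrite HIF inE.
have Hmap e x y : joins endsH e x y -> e != vw ->
    joins endsJ (psi e) (phi x) (phi y).
  move=> Hj Ne; case/joins_ends: Hj => [[-> ->]|[-> ->]]; first exact: Hpsi.
  by rewrite joins_sym; apply: Hpsi.
have in_ind e : e \in induced endsH setT FH -> e != vw ->
    psi e \in induced endsJ setT F.
  rewrite !inE /= => /andP [h1 h2] Ne.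
  by case/joins_ends: (Hpsi e Ne) => [[<- <-]|[<- <-]]; rewrite h1 h2.
case: (boolP ((v \in IH) && (w \in IH))) => [/andP [hv hw]|Hnvw].
  by left; rewrite -Hs -Ht; rewrite !inE in hv hw; split.
have HindH : independent endsH setT IH.
  move=> e _ [h1 h2]; case: (eqVneq e vw) => [Evw|Ne].
    subst e; move/negP: Hnvw; apply.
    by case/joins_ends: Hvw => [[-> ->]|[-> ->]]; rewrite h1 h2.
  apply: (HindJ (psi e) (in_setT _)); rewrite !inE in h1 h2.
  by case/joins_ends: (Hpsi e Ne) => [[<- <-]|[<- <-]].
have HacH_fail : ~ acyclic endsH (induced endsH setT FH).
  move=> Hac; apply: Hnc; exists IH, FH; split => //.
    apply/setP => x; rewrite !inE; apply/negbTE/negP => /andP [a b].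
    exact: disj a b.
  by apply/setP => x; rewrite !inE; exact: memIF.
have [xs [es Hc]] : exists xs es, is_circuit endsH (induced endsH setT FH) xs es.
  apply: NNPP => Hn; apply: HacH_fail => xs es Hc; apply: Hn; exists xs, es.
  exact: Hc.
move: Hc => [[Hpos Hsz Hux Hue] [Hall Hjoin]].
rewrite zip_cycle // in Hjoin.
have Hfst : map fst (zip xs es) = xs by apply: unzip1_zip; rewrite Hsz.
have Hsnd : map snd (zip xs es) = es by apply: unzip2_zip; rewrite Hsz.
set ps := zip xs es in Hjoin Hfst Hsnd.
case: (boolP (vw \in es)) => Hin; last first.
  exfalso; apply: (HacJ (map phi xs) (map psi es)).
  have Nes e : e \in es -> e != vw.
    by move=> He; apply/eqP => E; subst e; rewrite He in Hin.
  split; [split|split].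
  - by rewrite size_map.
  - by rewrite !size_map.
  - by rewrite map_inj_uniq.
  - rewrite map_inj_in_uniq // => a b Ha Hb; apply: psi_inj; rewrite !inE;
      by apply: Nes.
  - apply/allP => e' /mapP [e He ->]; apply: in_ind; last exact: Nes.
    exact: (allP Hall).
  - rewrite zip_cycle ?size_map //.
    rewrite -{1}Hfst -{1}Hsnd -!map_comp zip_map cycle_map.
    apply: (sub_in_cycle (P := fun p : VH * EH => p.2 != vw) _ _ Hjoin).
      move=> a b Pa Pb H; rewrite /relpre /Rg /=; exact: (Hmap _ _ _ H Pa).
    apply/allP => p Hp; apply: Nes; rewrite -Hsnd; exact: map_f.
have Hvwind : vw \in induced endsH setT FH by apply: (allP Hall).
have [vF wF] : v \in FH /\ w \in FH.
  move: Hvwind; rewrite inE /= => /andP [_ /andP [h1 h2]].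
  by case/joins_ends: Hvw => [[-> ->]|[-> ->]]; split.
rewrite !inE in vF wF.
right; split; [by rewrite -Hs | by rewrite -Ht |].
rewrite -Hsnd in Hin; case/mapP: Hin => p Hp Ep.
case: (rot_to Hp) => i ps' Hrot.
have Hcyc : cycle (Rg endsH) (p :: ps') by rewrite -Hrot rot_cycle.
have Hu1 : uniq (map fst (p :: ps')) by rewrite -Hrot map_rot rot_uniq Hfst.
have Hu2 : uniq (map snd (p :: ps')) by rewrite -Hrot map_rot rot_uniq Hsnd.
have Hmem q : q \in p :: ps' -> q.2 \in induced endsH setT FH.
  rewrite -Hrot mem_rot => Hq; apply: (allP Hall); rewrite -Hsnd; exact: map_f.
case: ps' Hrot Hcyc Hu1 Hu2 Hmem => [|q qs] Hrot Hcyc Hu1 Hu2 Hmem.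
  move: Hcyc => /= /andP [Hpp _]; rewrite /Rg -Ep in Hpp.
  have Evw : v = w.
    case/joins_ends: Hpp => [[E1 E2]|[E1 E2]];
    by case/joins_ends: Hvw => [[-> ->]|[-> ->]]; rewrite -E1 -E2.
  exists [::]; split => //=; by rewrite -Hs -Ht Evw.
move: Hcyc => /= /andP [Rpq Hpth].
rewrite rcons_path in Hpth; case/andP: Hpth => Hpth Hlast.
set rJ := fun x y => [exists e in induced endsJ setT F, joins endsJ e x y].
have Pall : all (fun a : VH * EH => (a.2 != vw) && (a.2 \in induced endsH setT FH))
    (q :: qs).
  apply/allP => a Ha.
  have -> : a.2 \in induced endsH setT FH by apply: Hmem; rewrite inE Ha orbT.
  rewrite andbT.
  apply/eqP => E; move: Hu2 => /= /andP [Hn _]; move/negP: Hn; apply.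
  by rewrite -Ep -E; exact: (map_f snd Ha).
have HP : path_in endsJ (induced endsJ setT F) (phi q.1) (phi p.1).
  exists (map (phi \o fst) (rcons qs p)); split.
  - rewrite -[phi q.1]/((phi \o fst) q) -map_cons map_comp map_inj_uniq //.
    by rewrite -rcons_cons -rot1_cons map_rot rot_uniq.
  - by rewrite -[phi q.1]/((phi \o fst) q) last_map last_rcons.
  - rewrite -[phi q.1]/((phi \o fst) q) path_map rcons_path; apply/andP; split.
      apply: (sub_in_path _ Pall Hpth) => a b /andP [Pa1 Pa2] _ Rab /=.
      by apply/existsP; exists (psi a.2); rewrite in_ind //= Hmap.
    have /andP [Pl1 Pl2] : (fun a : VH * EH => (a.2 != vw) && (a.2 \in induced endsH setT FH)) (last q qs).
      by apply: (allP Pall); rewrite mem_last.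
    by apply/existsP; exists (psi (last q qs).2); rewrite in_ind //= Hmap.
rewrite /Rg -Ep in Rpq.
case/joins_ends: Rpq => [[E1 E2]|[E1 E2]];
case/joins_ends: Hvw => [[E3 E4]|[E3 E4]].
- by apply: path_in_sym; rewrite -Hs -Ht E3 E4 -E1 -E2.
- by rewrite -Hs -Ht E3 E4 -E1 -E2.
- by rewrite -Hs -Ht E3 E4 -E1 -E2.
- by apply: path_in_sym; rewrite -Hs -Ht E3 E4 -E1 -E2.
Qed.
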